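(* Let $B_1,\dots,B_N$ be training bags, $B_i=[B_{i1},\dots,B_{iN_i}]$ with $B_{ij}\in\mathbb{R}^d$, let $\ker$ be a kernel with feature map $\Phi$, and $\nu\in(0,1)$. Let $\lambda$ minimize $\sum_{i=1}^N\|\sum_{j}\lambda_{ij}\Phi(B_{ij})-\frac1N\sum_{k}\sum_{j}\lambda_{kj}\Phi(B_{kj})\|^2$ subject to $\sum_j\lambda_{ij}=1$, $\lambda_{ij}\ge0$; set $b_i=\sum_j\lambda_{ij}\Phi(B_{ij})$. Let $\alpha$ solve $\min_\alpha\frac12\sum_{i,j}\alpha_i\alpha_j\ker(b_i,b_j)$ s.t. $0\le\alpha_i\le\frac1{\nu N}$, $\sum_i\alpha_i=1$, with $\rho$ and $l(x)=\sum_j\alpha_j\sum_k\lambda_{jk}\ker(x,B_{jk})-\rho$ as in one-class SVM. For each $i$ let $s_i=\arg\max_{j=1,\dots,N_i} l(B_{ij})$, and form the $2N$ training points $\{x_1,\dots,x_{2N}\}=\{b_1,\dots,b_N\}\cup\{B_{1s_1},\dots,B_{Ns_N}\}$. Let $\alpha'$ solve $$\min_{\alpha'}\tfrac12\sum_{p,q}\alpha'_p\alpha'_q\ker(x_p,x_q)\quad\text{s.t. } 0\le\alpha'_p\le\frac{1}{2\nu N},\ \sum_p\alpha'_p=1,$$ let $\rho'=\sum_{p=1}^{2N}\alpha'_p\ker(x_p,x_q)$ for an index $q$ with $0<\alpha'_q<\frac{1}{2\nu N}$, let $l'(x)=\sum_{p=1}^{2N}\alpha'_p\ker(x,x_p)-\rho'$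 and $f'(B_i)=\operatorname{sign}(\max_{r=1,\dots,N_i} l'(B_{ir}))$. If $\rho'\neq0$, then $\nu$ is an upper bound on the fraction of outlier bags, i.e. at most $\nu N$ of the training bags are outlier bags.
   Context: $\operatorname{sign}(y)=+1$ if $y\ge0$ and $-1$ otherwise; $\ker(x,y)=\Phi(x)\cdot\Phi(y)$, and kernel values involving virtual instances are expanded linearly, e.g. $\ker(b_i,x)=\sum_k\lambda_{ik}\ker(B_{ik},x)$. In this setting an outlier bag is a training bag $B_i$ that falls outside the decision boundary of the learned function, i.e. with $f'(B_i)=-1$. *)

(* Defs.v *)
From HB Require Import structures.
From mathcomp Require Import all_boot all_order all_algebra.
From mathcomp Require Export reals.
Set Implicit Arguments. Unset Strict Implicit. Unset Printing Implicit Defensive.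
Import Order.TTheory GRing.Theory Num.Theory.
Local Open Scope ring_scope.

(* Real inner product on an R-vector space V (the feature space of the kernel):
   linear in the first argument, symmetric, positive definite. *)
Definition inner_product (R : realType) (V : lmodType R) (ip : V -> V -> R) : Prop :=
  [/\ forall (a : R) (u v w : V), ip (a *: u + v) w = a * ip u w + ip v w,
      forall u v : V, ip u v = ip v u,
      forall v : V, 0 <= ip v v &
      forall v : V, ip v v = 0 -> v = 0].

Definition sgn (R : realType) (y : R) : R := if 0 <= y then 1 else -1.

Definition seqmax (R : realType) (s : seq R) : R := foldr Num.max (head 0 s) s.

(* max_{r < n} F r  (used only for n > 0) *)
Definition bagmax (R : realType) (n : nat) (F : 'I_n -> R) : R :=
  seqmax [seq F r | r <- enum 'I_n].

Definition vinst (R : realType) (d N : nat) (V : lmodType R) (Phi : 'rV[R]_d -> V)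
  (Ns : 'I_N -> nat) (B : forall i : 'I_N, 'I_(Ns i) -> 'rV[R]_d)
  (lam : forall i : 'I_N, 'I_(Ns i) -> R) (i : 'I_N) : V :=
  \sum_(j < Ns i) lam i j *: Phi (B i j).

Definition lam_feasible (R : realType) (N : nat) (Ns : 'I_N -> nat)
  (lam : forall i : 'I_N, 'I_(Ns i) -> R) : Prop :=
  forall i : 'I_N, (forall j, 0 <= lam i j) /\ \sum_(j < Ns i) lam i j = 1.

Definition lam_obj (R : realType) (d N : nat) (V : lmodType R) (ip : V -> V -> R)
  (Phi : 'rV[R]_d -> V) (Ns : 'I_N -> nat) (B : forall i : 'I_N, 'I_(Ns i) -> 'rV[R]_d)
  (lam : forall i : 'I_N, 'I_(Ns i) -> R) : R :=
  \sum_(i < N)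
    ip (vinst Phi B lam i - N%:R^-1 *: \sum_(k < N) vinst Phi B lam k)
       (vinst Phi B lam i - N%:R^-1 *: \sum_(k < N) vinst Phi B lam k).

Definition lam_optimal (R : realType) (d N : nat) (V : lmodType R) (ip : V -> V -> R)
  (Phi : 'rV[R]_d -> V) (Ns : 'I_N -> nat) (B : forall i : 'I_N, 'I_(Ns i) -> 'rV[R]_d)
  (lam : forall i : 'I_N, 'I_(Ns i) -> R) : Prop :=
  lam_feasible lam /\
  forall mu : forall i : 'I_N, 'I_(Ns i) -> R,
    lam_feasible mu -> lam_obj ip Phi B lam <= lam_obj ip Phi B mu.

Definition qp_feasible (R : realType) (I : finType) (C : R) (a : I -> R) : Prop :=
  (forall p, 0 <= a p <= C) /\ \sum_(p : I) a p = 1.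

Definition qp_obj (R : realType) (V : lmodType R) (ip : V -> V -> R) (I : finType)
  (x : I -> V) (a : I -> R) : R :=
  2^-1 * \sum_(p : I) \sum_(q : I) a p * a q * ip (x p) (x q).

Definition qp_solution (R : realType) (V : lmodType R) (ip : V -> V -> R) (I : finType)
  (x : I -> V) (C : R) (a : I -> R) : Prop :=
  qp_feasible C a /\
  forall a' : I -> R, qp_feasible C a' -> qp_obj ip x a <= qp_obj ip x a'.

(* Main.v *)
Require Import Defs.
From HB Require Import structures.
From mathcomp Require Import all_boot all_order all_algebra.
From mathcomp Require Import reals.
From mathcomp Require Import ring lra.
Import Order.TTheory GRing.Theory Num.Theory.
Set Implicit Arguments. Unset Strict Implicit.
Local Open Scope ring_scope.

Lemma foldr_max_ge (R : realType) (s : seq R) (z x : R) :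
  x \in s -> x <= foldr Num.max z s.
Proof.
elim: s => //= y s IH; rewrite inE => /orP [/eqP ->|xs].
  by rewrite le_max lexx.
by rewrite le_max IH ?orbT.
Qed.

Lemma bagmax_ge (R : realType) (n : nat) (F : 'I_n -> R) r : F r <= bagmax F.
Proof.
rewrite /bagmax /seqmax; apply: foldr_max_ge.
by apply: map_f; rewrite mem_enum.
Qed.

Lemma sum_delta (R : realType) (I : finType) (p : I) (F : I -> R) :
  \sum_r (r == p)%:R * F r = F p.
Proof.
rewrite (bigD1 p) //= eqxx mul1r big1 ?addr0 // => r /negbTE ->.
by rewrite mul0r.
Qed.

Lemma ip_lin_sum (R : realType) (V : lmodType R) (ip : V -> V -> R)
  (I : finType) (c : I -> R) (v : I -> V) (w : V) :
  inner_product ip -> ip (\sum_j c j *: v j) w = \sum_j c j * ip (v j) w.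
Proof.
case=> lin _ _ _.
have ip0 : ip 0 w = 0.
  have := lin 1 0 0 w; rewrite scale1r addr0 mul1r => H.
  by apply: (addrI (ip 0 w)); rewrite addr0 -H.
have ipD : {morph (fun v => ip v w) : x y / x + y >-> x + y}.
  by move=> x y /=; rewrite -{1}[x]scale1r lin mul1r.
rewrite (big_morph _ ipD ip0); apply: eq_bigr => j _.
by rewrite -[_ *: _]addr0 lin ip0 addr0.
Qed.

Lemma sum4 (R : realType) (I : finType) (A B B' C : I -> I -> R) (e : R) :
  \sum_p \sum_r (A p r + e * B p r + e * B' p r + e ^+ 2 * C p r) =
  \sum_p \sum_r A p r + e * (\sum_p \sum_r B p r) + e * (\sum_p \sum_r B' p r)
  + e ^+ 2 * (\sum_p \sum_r C p r).
Proof.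
rewrite !mulr_sumr -!big_split /=; apply: eq_bigr => p _.
by rewrite !mulr_sumr -!big_split.
Qed.

Lemma quad_expand (R : realType) (I : finType) (K : I -> I -> R)
  (Ksym : forall p r, K p r = K r p) (a h : I -> R) (e : R) :
  \sum_p \sum_r (a p + e * h p) * (a r + e * h r) * K p r =
  \sum_p \sum_r a p * a r * K p r
  + 2 * e * (\sum_p \sum_r h p * a r * K p r)
  + e ^+ 2 * (\sum_p \sum_r h p * h r * K p r).
Proof.
have E : forall p r, (a p + e * h p) * (a r + e * h r) * K p r =
  a p * a r * K p r + e * (h p * a r * K p r) + e * (h r * a p * K r p)
  + e ^+ 2 * (h p * h r * K p r).
  by move=> p r; rewrite (Ksym r p); ring.
under eq_bigr do under eq_bigr do rewrite E.
rewrite (sum4 (fun p r => a p * a r * K p r) (fun p r => h p * a r * K p r)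
  (fun p r => h r * a p * K r p)).
rewrite [X in _ + _ * X + _]exchange_big /=.
ring.
Qed.

Lemma kkt (R : realType) (V : lmodType R) (ip : V -> V -> R) (I : finType)
  (x : I -> V) (C : R) (a : I -> R) (q p : I) :
  inner_product ip -> qp_solution ip x C a -> 0 < a q ->
  \sum_r a r * ip (x p) (x r) < \sum_r a r * ip (x q) (x r) -> a p = C.
Proof.
move=> hip; have [_ ipsym _ _] := hip.
move=> [[bnd sum1] opt] aq0 lt.
have pq : p != q by apply: contraTneq lt => ->; rewrite ltxx.
have /andP[ap0 apC] := bnd p.
have /andP[_ aqC] := bnd q.
case: (eqVneq (a p) C) => // neC.
have apltC : a p < C by rewrite lt_neqAle neC apC.
pose G r := \sum_s a s * ip (x r) (x s).
pose L := G p - G q.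
have Lneg : L < 0 by rewrite /L subr_lt0.
pose h r := (r == p)%:R - (r == q)%:R : R.
pose M := \sum_p0 \sum_r h p0 * h r * ip (x p0) (x r).
pose e := Num.min (Num.min (C - a p) (a q)) (- L / (`|M| + 1)).
have M1 : 0 < `|M| + 1 by rewrite ltr_wpDl.
have e0 : 0 < e.
  rewrite /e !lt_min subr_gt0 apltC aq0 /=.
  by rewrite divr_gt0 // oppr_gt0.
have e1 : e <= C - a p by rewrite /e !ge_min lexx.
have e2 : e <= a q by rewrite /e !ge_min lexx orbT.
have e3 : e * (`|M| + 1) <= - L.
  rewrite -ler_pdivlMr // /e ge_min lexx orbT //.
pose a' r := a r + e * h r.
have feas : qp_feasible C a'.
  split.
    move=> r; rewrite /a' /h.
    have /andP[ar0 arC] := bnd r.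
    case: (eqVneq r p) => [->|rp]; first by rewrite (negbTE pq) subr0 mulr1; apply/andP; split; lra.
    case: (eqVneq r q) => [->|rq]; first by rewrite sub0r mulrN1; apply/andP; split; lra.
    by rewrite subrr mulr0 addr0 ar0 arC.
  rewrite /a' big_split /= sum1 -mulr_sumr /h.
  under eq_bigr do rewrite -[(_ == p)%:R]mulr1 -[(_ == q)%:R]mulr1.
  rewrite sumrB !sum_delta subrr mulr0 addr0 //.
have := opt a' feas.
rewrite /qp_obj /a' (@quad_expand _ _ (fun p0 r => ip (x p0) (x r)) (fun _ _ => ipsym _ _)).
have HL : \sum_p0 \sum_r h p0 * a r * ip (x p0) (x r) = L.
  rewrite /L /G.
  under eq_bigr do under eq_bigr do rewrite -mulrA.
  under eq_bigr do rewrite -mulr_sumr.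
  rewrite /h.
  under eq_bigr do rewrite mulrBl.
  by rewrite sumrB !sum_delta.
rewrite HL -/M.
have : e * `|M| < - L.
  apply: lt_le_trans e3; rewrite ltr_pM2l //; lra.
have : M <= `|M| by rewrite real_ler_norm ?num_real.
have : 0 <= e ^+ 2 by rewrite exprn_ge0 // ltW.
move=> H2 HM HeM H.
have : e ^+ 2 * M <= e ^+ 2 * `|M| by rewrite ler_wpM2l.
rewrite expr2 => H3.
have : e * (e * `|M|) <= e * (- L) by rewrite ler_wpM2l ?ltW // ltW.
nra.
Qed.

Theorem theorem2 (R : realType) (d N : nat) (V : lmodType R) (ip : V -> V -> R)
  (Phi : 'rV[R]_d -> V) (nu : R) (Ns : 'I_N -> nat)
  (B : forall i : 'I_N, 'I_(Ns i) -> 'rV[R]_d)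
  (lam : forall i : 'I_N, 'I_(Ns i) -> R)
  (alpha : 'I_N -> R) (rho : R) (s : forall i : 'I_N, 'I_(Ns i))
  (alpha' : 'I_N + 'I_N -> R) (q : 'I_N + 'I_N) :
  inner_product ip ->
  0 < nu < 1 ->
  (0 < N)%N ->
  (forall i : 'I_N, 0 < Ns i)%N ->
  lam_optimal ip Phi B lam ->
  qp_solution ip (vinst Phi B lam) (nu * N%:R)^-1 alpha ->
  (exists i0 : 'I_N, 0 < alpha i0 < (nu * N%:R)^-1 /\
     rho = \sum_(j < N) alpha j * ip (vinst Phi B lam j) (vinst Phi B lam i0)) ->
  let l := fun x : 'rV[R]_d =>
    \sum_(j < N) alpha j * \sum_(k < Ns j) lam j k * ip (Phi x) (Phi (B j k)) - rho in
  (forall (i : 'I_N) (j : 'I_(Ns i)), l (B i j) <= l (B i (s i))) ->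
  let xs := fun p : 'I_N + 'I_N =>
    match p with inl i => vinst Phi B lam i | inr i => Phi (B i (s i)) end in
  qp_solution ip xs (2 * nu * N%:R)^-1 alpha' ->
  0 < alpha' q < (2 * nu * N%:R)^-1 ->
  let rho' := \sum_(p : 'I_N + 'I_N) alpha' p * ip (xs p) (xs q) in
  let l' := fun v : V => \sum_(p : 'I_N + 'I_N) alpha' p * ip v (xs p) - rho' in
  let f' := fun i : 'I_N => sgn (bagmax (fun r : 'I_(Ns i) => l' (Phi (B i r)))) in
  rho' != 0 ->
  (#|[set i : 'I_N | f' i == -1]|%:R <= nu * N%:R).
Proof.
move=> hip /andP[nu0 nu1] N0 Ns0 [lamfeas _] _ _ l _ xs qp2 /andP[aq0 aqC] rho' l' f' _.
have [_ ipsym _ _] := hip.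
set C := (2 * nu * N%:R)^-1.
have Nr : 0 < N%:R :> R by rewrite ltr0n.
have D0 : 0 < 2 * nu * N%:R by rewrite !mulr_gt0.
have DC : (2 * nu * N%:R) * C = 1 by rewrite /C mulfV // gt_eqF.
have C0 : 0 < C by rewrite /C invr_gt0.
have [[bnd sum1] _] := qp2.
have key : forall p, l' (xs p) < 0 -> alpha' p = C.
  move=> p; rewrite /l' /rho' subr_lt0 => H.
  apply: (kkt hip qp2 aq0).
  apply: (lt_le_trans H); rewrite le_eqVlt; apply/orP; left; apply/eqP.
  by apply: eq_bigr => r _; rewrite ipsym.
have Hout : forall i, f' i == -1 -> alpha' (inl i) = C /\ alpha' (inr i) = C.
  move=> i; rewrite /f' /sgn.
  set m := bagmax _.
  case: ifP => Hm.
    move/eqP => E; exfalso; have : (1 : R) = -1 := E; lra.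
  move=> _.
  have m0 : m < 0 by rewrite ltNge Hm.
  have Hr : forall r, l' (Phi (B i r)) <= m by move=> r; exact: bagmax_ge.
  have [lam0 lam1] := lamfeas i.
  split; apply: key; last first.
    by apply: le_lt_trans m0; exact: Hr.
  have E : l' (vinst Phi B lam i) = \sum_j lam i j * l' (Phi (B i j)).
    rewrite /l' /vinst.
    under eq_bigr do rewrite (ip_lin_sum _ _ _ hip) mulr_sumr.
    rewrite exchange_big /=.
    under [RHS]eq_bigr do rewrite mulrBr mulr_sumr.
    rewrite sumrB -mulr_suml lam1 mul1r.
    congr (_ - _); apply: eq_bigr => j _; apply: eq_bigr => p _; ring.
  rewrite /xs E; apply: (le_lt_trans _ m0).
  rewrite -[leRHS]mul1r -lam1 mulr_suml.
  by apply: ler_sum => j _; rewrite ler_wpM2l.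
set S := [set i | f' i == -1].
have H1 : \sum_(i in S) C <= \sum_i alpha' (inl i).
  rewrite big_mkcond; apply: ler_sum => i _; case: ifP => [|_].
    by rewrite inE => /Hout [-> _].
  by have /andP[] := bnd (inl i).
have H2 : \sum_(i in S) C <= \sum_i alpha' (inr i).
  rewrite big_mkcond; apply: ler_sum => i _; case: ifP => [|_].
    by rewrite inE => /Hout [_ ->].
  by have /andP[] := bnd (inr i).
move: sum1; rewrite big_sumType /= => sum1.
move: H1 H2; rewrite sumr_const -(mulr_natl C) => H1 H2.
set k := #|S|%:R in H1 H2 *.
have k0 : 0 <= k by rewrite /k ler0n.
have h2 : k * C + k * C <= 1.
  by move: (lerD H1 H2); rewrite sum1.
have h3 : (k * C + k * C) * (2 * nu * N%:R) <= 1 * (2 * nu * N%:R).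
  by rewrite ler_pM2r.
have E : (k * C + k * C) * (2 * nu * N%:R) = (k + k) * ((2 * nu * N%:R) * C).
  ring.
move: h3; rewrite E DC mulr1 mul1r -!mulrA => h3.
set t := nu * N%:R in h3 *.
lra.
Qed.
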